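(* Let $p,q$ be coprime integers with $q>0$ and let $G(p,q)=\langle a,b\mid a^2ba^2b^2a^{-1}b^2,\ m^pl^q\rangle$, where $m=a^{-1}b^{-2}$ and $l=ab^{-1}a^2m^{-18}$. Let $k\in G(p,q)$ be an element with $m=k^q$ and $l=k^{-p}$. Suppose $G(p,q)$ acts on the right on $\mathbb{R}$ by orientation-preserving homeomorphisms, $x\mapsto xg$. If $xk>x$ for all $x\in\mathbb{R}$, then $x>xb$ for all $x\in\mathbb{R}$.
   Context: $G(p,q)$ is the fundamental group of $p/q$-Dehn surgery on the $(-2,3,7)$-pretzel knot, with $m$, $l$ the meridian and longitude. *)

(* Defs.v *)
From Stdlib Require Import Reals ZArith List.
Import ListNotations.
Open Scope R_scope.

(** Words in the free group on generators a, b. A letter (g, e) is g if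
    e = false and g^{-1} if e = true. *)
Inductive gen := Ga | Gb.
Definition letter := (gen * bool)%type.
Definition word := list letter.

Definition wa : word := [(Ga, false)].
Definition wb : word := [(Gb, false)].
Definition wainv : word := [(Ga, true)].
Definition wbinv : word := [(Gb, true)].

Definition winv (w : word) : word := rev (map (fun '(g, e) => (g, negb e)) w).
Definition wrep (n : nat) (w : word) : word := concat (repeat w n).
Definition wpow (w : word) (z : Z) : word :=
  match z with
  | Z0 => []
  | Zpos n => wrep (Pos.to_nat n) w
  | Zneg n => wrep (Pos.to_nat n) (winv w)
  end.

Definition rel1 : word := wa ++ wa ++ wb ++ wa ++ wa ++ wb ++ wb ++ wainv ++ wb ++ wb.
Definition merid : word := wainv ++ wbinv ++ wbinv.
Definition longi : word := wa ++ wbinv ++ wa ++ wa ++ wpow merid (-18).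
Definition rel2 (p q : Z) : word := wpow merid p ++ wpow longi q.

Inductive Geq (p q : Z) : word -> word -> Prop :=
| Geq_refl : forall w, Geq p q w w
| Geq_sym : forall u v, Geq p q u v -> Geq p q v u
| Geq_trans : forall u v w, Geq p q u v -> Geq p q v w -> Geq p q u w
| Geq_cancel : forall u v g e, Geq p q (u ++ [(g, e); (g, negb e)] ++ v) (u ++ v)
| Geq_rel1 : forall u v, Geq p q (u ++ rel1 ++ v) (u ++ v)
| Geq_rel2 : forall u v, Geq p q (u ++ rel2 p q ++ v) (u ++ v).

(** A right action of G(p,q) on R by orientation-preserving homeomorphisms,
    given on representing words: act w x = x w. *)
Definition is_oriented_homeo (f : R -> R) : Prop :=
  continuity f /\ (forall x y, x < y -> f x < f y) /\ (forall y, exists x, f x = y).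

Definition right_action_by_homeo (p q : Z) (act : word -> R -> R) : Prop :=
  (forall u v, Geq p q u v -> forall x, act u x = act v x) /\
  (forall x, act [] x = x) /\
  (forall u v x, act (u ++ v) x = act v (act u x)) /\
  (forall w, is_oriented_homeo (act w)).

(* Main.v *)
Require Import Defs.
From Stdlib Require Import Reals ZArith List Lra Lia.
Import ListNotations.
Open Scope R_scope.

Definition gen_eqb (g h : gen) : bool :=
  match g, h with Ga, Ga => true | Gb, Gb => true | _, _ => false end.

Lemma gen_eqb_eq g h : gen_eqb g h = true -> g = h.
Proof. destruct g, h; simpl; congruence. Qed.

Definition push (x : letter) (s : word) : word :=
  match s with
  | y :: s' => if andb (gen_eqb (fst x) (fst y)) (Bool.eqb (snd y) (negb (snd x)))
               then s' else x :: s
  | [] => [x]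
  end.

Fixpoint red (w : word) : word :=
  match w with [] => [] | x :: w' => push x (red w') end.

Lemma Geq_ctx p q u v : Geq p q u v -> forall x y, Geq p q (x ++ u ++ y) (x ++ v ++ y).
Proof.
  induction 1; intros x y.
  - apply Geq_refl.
  - apply Geq_sym; auto.
  - eapply Geq_trans; eauto.
  - rewrite <- !app_assoc.
    replace (x ++ u ++ [(g, e); (g, negb e)] ++ v ++ y) with
      ((x ++ u) ++ [(g, e); (g, negb e)] ++ (v ++ y)) by (rewrite <- !app_assoc; reflexivity).
    replace (x ++ u ++ v ++ y) with ((x ++ u) ++ (v ++ y)) by (rewrite <- !app_assoc; reflexivity).
    apply Geq_cancel.
  - replace (x ++ (u ++ rel1 ++ v) ++ y) with ((x ++ u) ++ rel1 ++ (v ++ y)) by (rewrite <- !app_assoc; reflexivity).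
    replace (x ++ (u ++ v) ++ y) with ((x ++ u) ++ (v ++ y)) by (rewrite <- !app_assoc; reflexivity).
    apply Geq_rel1.
  - replace (x ++ (u ++ rel2 p q ++ v) ++ y) with ((x ++ u) ++ rel2 p q ++ (v ++ y)) by (rewrite <- !app_assoc; reflexivity).
    replace (x ++ (u ++ v) ++ y) with ((x ++ u) ++ (v ++ y)) by (rewrite <- !app_assoc; reflexivity).
    apply Geq_rel2.
Qed.

Lemma Geq_cons p q a u v : Geq p q u v -> Geq p q (a :: u) (a :: v).
Proof.
  intro H. pose proof (Geq_ctx p q u v H [a] []) as H'.
  rewrite !app_nil_r in H'. exact H'.
Qed.

Lemma Geq_push p q x s : Geq p q (x :: s) (push x s).
Proof.
  destruct s as [|y s']; simpl; [apply Geq_refl|].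
  destruct x as [g e], y as [h f]; simpl.
  destruct (gen_eqb g h) eqn:E1; simpl; [|apply Geq_refl].
  destruct (Bool.eqb f (negb e)) eqn:E2; [|apply Geq_refl].
  apply gen_eqb_eq in E1. apply Bool.eqb_prop in E2. subst.
  exact (Geq_cancel p q [] s' h e).
Qed.

Lemma Geq_red p q w : Geq p q w (red w).
Proof.
  induction w as [|x w IH]; simpl; [apply Geq_refl|].
  eapply Geq_trans; [apply Geq_cons; exact IH| apply Geq_push].
Qed.

Lemma Geq_of_red p q u v : red u = red v -> Geq p q u v.
Proof.
  intro H. eapply Geq_trans; [apply Geq_red|]. rewrite H.
  apply Geq_sym, Geq_red.
Qed.

Definition positive_el (act : word -> R -> R) (w : word) := forall x, act w x > x.

Lemma wrep_pos p q act k : right_action_by_homeo p q act -> positive_el act k ->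
  forall n x, (n >= 1)%nat -> act (wrep n k) x > x.
Proof.
  intros [H1 [H2 [H3 H4]]] Hk.
  assert (Hge : forall n x, act (wrep n k) x >= x).
  { induction n as [|n IH]; intro x; unfold wrep in *; simpl.
    - rewrite H2. lra.
    - rewrite H3. specialize (IH (act k x)). specialize (Hk x). lra. }
  intros [|n] x Hn; [lia|]. unfold wrep in *; simpl. rewrite H3.
  specialize (Hge n (act k x)). unfold wrep in Hge. specialize (Hk x). lra.
Qed.

Lemma conj_pos p q act h' m h : right_action_by_homeo p q act ->
  Geq p q (h' ++ h) [] -> positive_el act m -> positive_el act (h' ++ m ++ h).
Proof.
  intros [H1 [H2 [H3 H4]]] Hh Hm x.
  rewrite !H3.
  assert (E : act h (act h' x) = x).
  { rewrite <- H3. rewrite (H1 _ _ Hh). apply H2. }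
  destruct (H4 h) as [_ [Hmono _]].
  specialize (Hmono _ _ (Hm (act h' x))). lra.
Qed.

Lemma prod_pos p q act u v : right_action_by_homeo p q act ->
  positive_el act u -> positive_el act v -> positive_el act (u ++ v).
Proof.
  intros [H1 [H2 [H3 H4]]] Hu Hv x. rewrite H3.
  specialize (Hu x). specialize (Hv (act u x)). lra.
Qed.

Definition Wb : word :=
  merid ++ ((wb ++ wb) ++ merid ++ (wbinv ++ wbinv)) ++
  ((winv merid ++ wbinv ++ wbinv) ++ merid ++ (wb ++ wb ++ merid)).

Theorem mainTheorem8 :
  forall (p q : Z), Z.gcd p q = 1%Z -> (0 < q)%Z ->
  forall k : word,
    Geq p q merid (wpow k q) -> Geq p q longi (wpow k (- p)) ->
  forall act : word -> R -> R, right_action_by_homeo p q act ->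
    (forall x, act k x > x) ->
    forall x, x > act wb x.
Proof.
  intros p q _ Hq k Hm _ act Hact Hk x.
  assert (Hmp : positive_el act merid).
  { intro y. pose proof Hact as [H1 _]. rewrite (H1 _ _ Hm).
    destruct q as [|n|n]; try lia. simpl.
    eapply wrep_pos; eauto. lia. }
  assert (HW : positive_el act Wb).
  { unfold Wb. apply (prod_pos p q); auto.
    apply (prod_pos p q); auto; apply (conj_pos p q); auto;
      apply Geq_of_red; reflexivity. }
  assert (HG : Geq p q Wb wbinv).
  { eapply Geq_trans.
    - apply Geq_sym.
      apply (Geq_rel1 p q (firstn 6 Wb) (skipn 6 Wb)).
    - apply Geq_of_red. reflexivity. }
  destruct Hact as [H1 [H2 [H3 H4]]].
  assert (E : act wbinv (act wb x) = x).
  { rewrite <- H3. rewrite (H1 (wb ++ wbinv) [] (Geq_of_red p q (wb ++ wbinv) [] eq_refl)). apply H2. }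
  specialize (HW (act wb x)). rewrite (H1 _ _ HG) in HW. lra.
Qed.
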